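(* Fix $k\in\mathbb{N}$. Suppose $M$ is a matroid that is nearly finitary but not $n$-nearly finitary for any $n\in\mathbb{N}$. Then $M[k]$ is nearly finitary but not $n$-nearly finitary for any $n\in\mathbb{N}$.
   Context: Matroids (possibly infinite): $\emptyset$ independent; subsets of independent sets independent; if $B$ is maximal independent and $A$ non-maximal independent, then $A\cup\{b\}$ is independent for some $b\in B\setminus A$; for independent $A\subseteq X\subseteq E$ there is a maximal independent $S$ with $A\subseteq S\subseteq X$. Bases are maximal independent sets; the rank is the cardinality of a base (infinite cardinalities identified). For a matroid $M=(E,\mathcal{L})$ of rank at least $k$, $M[k]=(E,\mathcal{L}[k])$ with $\mathcal{L}[k]=\{S\in\mathcal{L}:\exists T\in\mathcal{L},\ T\supseteq S,\ |T\setminus S|=k\}$, which is a matroid. The finitarization $M^{\mathrm{fin}}$ has as independent sets those sets all of whose finite subsets are independent in $M$. $M$ is nearly finitary if $F\setminus B$ is finite whenever a base $F$ of $M^{\mathrm{fin}}$ contains a base $B$ of $M$; $n$-nearly finitary if $|F\setminus B|\le n$ for all such pairs. *)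

(* Defs.v *)
From Stdlib Require Import List Arith.
Import ListNotations.

Definition set_of (E : Type) := E -> Prop.

Definition subset {E} (A B : set_of E) : Prop := forall x, A x -> B x.
Definition emptyset {E} : set_of E := fun _ => False.
Definition add1 {E} (A : set_of E) (b : E) : set_of E := fun x => A x \/ x = b.
Definition setminus {E} (A B : set_of E) : set_of E := fun x => A x /\ ~ B x.

Definition indep_sys (E : Type) := set_of E -> Prop.

Definition maximal_indep_in {E} (L : indep_sys E) (X S : set_of E) : Prop :=
  subset S X /\ L S /\ forall T, L T -> subset S T -> subset T X -> subset T S.

Definition is_base {E} (L : indep_sys E) (B : set_of E) : Prop :=
  maximal_indep_in L (fun _ => True) B.

Definition is_matroid {E} (L : indep_sys E) : Prop :=
  L emptyset /\
  (forall A B, L B -> subset A B -> L A) /\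
  (forall A B, is_base L B -> L A -> ~ is_base L A ->
     exists b, B b /\ ~ A b /\ L (add1 A b)) /\
  (forall A X, L A -> subset A X ->
     exists S, subset A S /\ maximal_indep_in L X S).

Definition finite_set {E} (A : set_of E) : Prop :=
  exists l : list E, forall x, A x -> In x l.

Definition card_le {E} (A : set_of E) (n : nat) : Prop :=
  exists l : list E, length l <= n /\ forall x, A x -> In x l.

Definition card_eq {E} (A : set_of E) (n : nat) : Prop :=
  exists l : list E, NoDup l /\ length l = n /\ forall x, A x <-> In x l.

Definition trunc_indep {E} (L : indep_sys E) (k : nat) : indep_sys E :=
  fun S => L S /\ exists T, L T /\ subset S T /\ card_eq (setminus T S) k.

Definition fin_indep {E} (L : indep_sys E) : indep_sys E :=
  fun S => forall F, subset F S -> finite_set F -> L F.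

Definition nearly_finitary {E} (L : indep_sys E) : Prop :=
  forall F B, is_base (fin_indep L) F -> is_base L B -> subset B F ->
    finite_set (setminus F B).

Definition n_nearly_finitary {E} (L : indep_sys E) (n : nat) : Prop :=
  forall F B, is_base (fin_indep L) F -> is_base L B -> subset B F ->
    card_le (setminus F B) n.

(* Main.v *)
Require Import Defs.
From Stdlib Require Import List Arith Lia Classical.
Import ListNotations.

Lemma fin_bounded {E} (A : set_of E) n :
  (forall l, NoDup l -> (forall x, In x l -> A x) -> length l <= n) ->
  exists l, NoDup l /\ (forall x, A x <-> In x l) /\ length l <= n.
Proof.
  intros H.
  set (Q := fun j => exists l, NoDup l /\ (forall x, In x l -> A x) /\ length l = j).
  assert (Hj : forall m, Q 0 -> ~ Q m -> exists j, Q j /\ ~ Q (S j)).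
  { induction m; intros H0 Hm. contradiction.
    destruct (classic (Q m)) as [Hq|Hq]. exists m; auto. apply IHm; auto. }
  destruct (Hj (S n)) as [j [[l [Hnd [Hin Hlen]]] Hnq]].
  - exists []; repeat split; auto. constructor. intros x [].
  - intros [l [Hnd [Hin Hlen]]]. specialize (H l Hnd Hin). lia.
  - exists l. split; auto. split; [|apply H; auto].
    intros x; split; auto. intros Ax. destruct (classic (In x l)) as [|Hn]; auto.
    exfalso. apply Hnq. exists (x::l). repeat split. constructor; auto.
    intros y [<-|Hy]; auto. simpl; lia.
Qed.

Lemma fin_enum {E} (A : set_of E) : finite_set A ->
  exists l, NoDup l /\ (forall x, A x <-> In x l).
Proof.
  intros [l0 H0]. destruct (fin_bounded A (length l0)) as [l [? [? _]]].
  - intros l Hnd Hin. apply NoDup_incl_length; auto. intros x Hx; auto.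
  - eauto.
Qed.

Lemma pick {E} (F : set_of E) : ~ finite_set F -> forall lg k,
  exists l, NoDup l /\ length l = k /\ forall x, In x l -> F x /\ ~ In x lg.
Proof.
  intros Hf lg k; induction k.
  - exists []; split; [constructor|]; split; [reflexivity|intros ? []].
  - destruct IHk as [l [Hnd [Hlen Hl]]].
    destruct (classic (exists x, F x /\ ~ In x (lg ++ l))) as [[x [Fx Hx]]|Hn].
    + exists (x::l). split. constructor; auto. intro; apply Hx; apply in_or_app; auto.
      split. simpl; lia.
      intros y [<-|Hy]. split; auto. intro; apply Hx; apply in_or_app; auto. apply Hl; auto.
    + exfalso. apply Hf. exists (lg ++ l). intros x Fx.
      destruct (classic (In x (lg++l))); auto. exfalso; apply Hn; eauto.
Qed.

Lemma card_remove {E} (A : set_of E) m x : card_eq A (S m) -> A x ->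
  card_eq (fun y => A y /\ y <> x) m.
Proof.
  intros [l [Hnd [Hlen Hl]]] Ax.
  apply Hl in Ax. destruct (in_split _ _ Ax) as [l1 [l2 ->]].
  exists (l1 ++ l2). split. eapply NoDup_remove_1; eauto. split.
  rewrite length_app in *; simpl in Hlen; lia.
  intros y; split.
  - intros [Ay Hy]. apply Hl in Ay. apply in_app_or in Ay. apply in_or_app.
    destruct Ay as [|[Hxy|]]; auto; congruence.
  - intros Hy. split. apply Hl. apply in_or_app. apply in_app_or in Hy.
    destruct Hy; simpl; auto. intros ->. apply (NoDup_remove_2 _ _ _ Hnd). auto.
Qed.

Lemma card_ext {E} (A B : set_of E) n : (forall x, A x <-> B x) -> card_eq A n -> card_eq B n.
Proof.
  intros H [l [? [? Hl]]]. exists l; split; auto; split; auto; intros y; rewrite <- H; apply Hl.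
Qed.

Lemma base_of_max {E} (L : indep_sys E) X T B : is_matroid L -> maximal_indep_in L X T ->
  subset B X -> is_base L B -> is_base L T.
Proof.
  intros [_ [_ [HI3 _]]] [HTX [HTL HTm]] HBX HB. apply NNPP; intro Hn.
  destruct (HI3 T B HB HTL Hn) as [b [Bb [nTb Hb]]]. apply nTb.
  apply (HTm (add1 T b)); auto. intros x Hx; left; auto.
  intros x [Tx| ->]; auto. right; reflexivity.
Qed.

Lemma RI3 {E} (L : indep_sys E) Y K A y :
  is_matroid L -> maximal_indep_in L Y K -> subset A Y -> L A -> Y y -> ~ A y ->
  L (add1 A y) -> (forall x, K x -> ~ A x -> ~ L (add1 A x)) -> False.
Proof.
  intros HM [HKY [HK HKmax]] HAY HA Hy HAy HAyL Hno.
  pose proof HM as [H0 [Hsub [HI3 HIM]]].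
  destruct (HIM K (fun _ => True) HK (fun _ _ => I)) as [BK [HKBK HBK]].
  assert (HBKL : L BK) by (destruct HBK as [_ [? _]]; auto).
  assert (HZ : forall z, BK z -> Y z -> K z).
  { intros z Bz Yz. apply (HKmax (add1 K z)).
    apply (Hsub _ BK); auto. intros w [Kw| ->]; auto.
    intros w Kw; left; auto. intros w [Kw| ->]; auto. right; reflexivity. }
  destruct (HIM A (fun x => A x \/ BK x) HA (fun x h => or_introl h)) as [T [HAT HTmx]].
  pose proof HTmx as [HTX [HTL HTmax]].
  assert (HTbase : is_base L T).
  { apply (base_of_max L _ T BK HM HTmx); auto. intros v Hv; right; auto. }
  assert (HTA : forall t, T t -> ~ A t -> BK t /\ ~ Y t).
  { intros t Tt nAt. destruct (HTX t Tt) as [|Bt]; [contradiction|]. split; auto.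
    intros Yt. apply (Hno t (HZ t Bt Yt) nAt). apply (Hsub _ T HTL).
    intros w [Aw| ->]; auto. }
  destruct (HIM (add1 A y) (add1 T y) HAyL) as [P [HAyP HPmx]].
  { intros w [Aw| ->]; [left; auto|right; auto]. }
  pose proof HPmx as [HPX [HPL HPmax]].
  assert (HPbase : is_base L P).
  { apply (base_of_max L _ P T HM HPmx); auto. intros v Hv; left; auto. }
  assert (Hz1 : exists z1, T z1 /\ ~ P z1).
  { apply NNPP; intro Hn.
    assert (HTP : subset (add1 T y) P).
    { intros v [Tv| ->]. apply NNPP; intro nP; apply Hn; eauto. apply HAyP; right; auto. }
    assert (Ty : T y).
    { destruct HTbase as [_ [_ Hm]]. apply (Hm (add1 T y)).
      apply (Hsub _ P); auto. intros v Hv; left; auto. intros ? ?; exact I. right; auto. }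
    destruct (HTA y Ty HAy) as [_ nY]. contradiction. }
  destruct Hz1 as [z1 [Tz1 nPz1]].
  assert (nAz1 : ~ A z1) by (intro; apply nPz1; apply HAyP; left; auto).
  destruct (HTA z1 Tz1 nAz1) as [BKz1 nYz1].
  set (C := fun x => BK x /\ x <> z1).
  assert (HCL : L C) by (apply (Hsub _ BK); auto; intros v [? ?]; auto).
  assert (HCnb : ~ is_base L C).
  { intros [_ [_ Hm]]. assert (Hs : subset BK C).
    { apply Hm; auto. intros v [? ?]; auto. intros ? ?; exact I. }
    destruct (Hs z1 BKz1); auto. }
  destruct (HI3 C P HPbase HCL HCnb) as [w [Pw [nCw HCw]]].
  assert (Yw : Y w /\ ~ BK w).
  { destruct (HPX w Pw) as [Tw| ->].
    - destruct (classic (A w)) as [Aw|nAw].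
      + split. apply HAY; auto. intro BKw. apply nCw. split; auto. intros ->. contradiction.
      + destruct (HTA w Tw nAw) as [BKw _]. exfalso. apply nCw. split; auto.
        intros ->. contradiction.
    - split; auto. intro BKw. apply nCw. split; auto. intros ->. contradiction. }
  destruct Yw as [Yw nBKw].
  assert (Kw : K w).
  { apply (HKmax (add1 K w)).
    - apply (Hsub _ (add1 C w) HCw). intros v [Kv| ->]. left. split. apply HKBK; auto.
      intros ->. apply nYz1. apply HKY; auto. right; auto.
    - intros v Kv; left; auto.
    - intros v [Kv| ->]; auto.
    - right; reflexivity. }
  apply nBKw. apply HKBK; auto.
Qed.

Lemma KLR {E} (L : indep_sys E) Y K : is_matroid L -> maximal_indep_in L Y K ->
  forall m I J l, subset I K -> card_eq (setminus K I) m -> subset J Y -> L J ->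
  subset I J -> NoDup l -> m < length l -> (forall x, In x l -> J x /\ ~ I x) -> False.
Proof.
  intros HM HK m. induction m as [|m IH]; intros I J l HIK Hc HJY HJ HIJ Hnd Hlen Hl.
  - destruct l as [|y0 l']; simpl in Hlen; [lia|].
    destruct (Hl y0 (or_introl eq_refl)) as [Jy nIy].
    destruct HK as [HKY [HKL HKm]].
    assert (HKI : subset K I).
    { intros x Kx. apply NNPP; intro nIx. destruct Hc as [lc [_ [Hlc Hc]]].
      destruct lc; [|simpl in Hlc; lia]. apply (proj1 (Hc x)). split; auto. }
    apply nIy. apply HKI. apply (HKm J); auto. intros x Kx; apply HIJ, HKI; auto.
  - destruct l as [|y0 l']; simpl in Hlen; [lia|].
    inversion Hnd as [|? ? Hy0 Hnd']; subst.
    set (J' := fun x => I x \/ In x l').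
    assert (HJ'J : subset J' J).
    { intros x [Ix|Ix]; [apply HIJ; auto| apply Hl; right; auto]. }
    pose proof HM as [H0 [Hsub _]].
    pose proof HK as [HKY _].
    assert (HJ'L : L J') by (apply (Hsub _ J); auto).
    destruct (classic (exists x, K x /\ ~ J' x /\ L (add1 J' x))) as [[x [Kx [nJ'x HJ'x]]]|Hn].
    + apply (IH (add1 I x) (add1 J' x) l').
      * intros v [Iv| ->]; auto.
      * apply card_ext with (A := fun y => setminus K I y /\ y <> x).
        { intros v; unfold setminus, add1; split.
          - intros [[Kv nIv] nvx]. split; auto. intros [|]; auto.
          - intros [Kv Hv]. refine (conj (conj Kv _) _).
            + intro; apply Hv; left; auto.
            + intro; apply Hv; right; auto. }
        apply card_remove; auto. split; auto. intro Ix; apply nJ'x; left; auto.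
      * intros v [J'v| ->]; [apply HJY, HJ'J; auto | apply HKY; auto].
      * auto.
      * intros v [Iv| ->]; [left; left; auto| right; auto].
      * auto.
      * lia.
      * intros v Hv. split. left; right; auto. intros [Iv| ->].
        apply (Hl v (or_intror Hv)); auto. apply nJ'x; right; auto.
    + apply (RI3 L Y K J' y0 HM HK).
      * intros v Hv; apply HJY, HJ'J; auto.
      * auto.
      * apply HJY, Hl; left; auto.
      * intros [Iy|Iy]; [apply (Hl y0); simpl; auto| contradiction].
      * apply (Hsub _ J); auto. intros v [J'v| ->]; auto. apply Hl; left; auto.
      * intros x Kx nJ'x HL. apply Hn; eauto.
Qed.

Lemma SB {E} (L : indep_sys E) F S : is_matroid L -> is_base (fin_indep L) F ->
  maximal_indep_in L F S -> is_base L S.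
Proof.
  intros HM HF HS. pose proof HM as [H0 [Hsub [HI3 HIM]]].
  destruct HS as [HSF [HSL HSm]].
  apply NNPP; intro Hnb.
  destruct (HIM emptyset (fun _ => True) H0 (fun _ h => match h with end)) as [B0 [_ HB0]].
  destruct (HI3 S B0 HB0 HSL Hnb) as [b [_ [nSb HSb]]].
  assert (HD : forall t, F t -> ~ S t -> ~ L (add1 S t)).
  { intros t Ft nSt Ht. apply nSt. apply (HSm (add1 S t)); auto.
    intros v Hv; left; auto. intros v [Sv| ->]; auto. right; auto. }
  assert (nFb : ~ F b). { intros Fb. exact (HD b Fb nSb HSb). }
  destruct HF as [_ [HFL HFm]].
  assert (HnFb : ~ fin_indep L (add1 F b)).
  { intros Hfb. apply nFb. apply (HFm (add1 F b)); auto. intros v Hv; left; auto.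
    intros ? ?; exact I. right; auto. }
  unfold fin_indep in HnFb. apply not_all_ex_not in HnFb as [G HG].
  apply imply_to_and in HG as [HGF HG]. apply imply_to_and in HG as [[lG HlG] nLG].
  set (D := fun x => G x /\ F x).
  assert (HDL : L D).
  { apply HFL. intros v [_ Fv]; auto. exists lG. intros v [Gv _]; auto. }
  assert (nDb : ~ L (add1 D b)).
  { intro H. apply nLG. apply (Hsub _ (add1 D b)); auto. intros v Gv.
    destruct (HGF v Gv) as [Fv| ->]; [left; split; auto|right; auto]. }
  set (Y := fun x => S x \/ D x \/ x = b).
  destruct (HIM D Y HDL (fun x h => or_intror (or_introl h))) as [K2 [HDK2 HK2]].
  pose proof HK2 as [HK2Y [HK2L HK2m]].
  assert (nK2b : ~ K2 b).
  { intro. apply nDb. apply (Hsub _ K2); auto. intros v [Dv| ->]; auto. }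
  assert (HSbY : maximal_indep_in L Y (add1 S b)).
  { split. intros v [Sv| ->]; unfold Y; auto. split; auto. intros T HT HST HTY v Tv.
    destruct (HTY v Tv) as [Sv|[Dv| ->]]. left; auto.
    destruct (classic (S v)) as [Sv|nSv]; [left; auto|]. exfalso.
    apply (HD v (proj2 Dv) nSv). apply (Hsub _ T); auto.
    intros w [Sw| ->]; auto. apply HST; left; auto.
    right; auto. }
  set (P := fun x => K2 x /\ S x).
  destruct (fin_enum (setminus K2 P)) as [lK [HlKnd HlK]].
  { exists lG. intros v [K2v nPv]. apply HlG.
    destruct (HK2Y v K2v) as [Sv|[Dv| ->]].
    exfalso; apply nPv; split; auto. apply Dv. contradiction. }
  destruct (fin_bounded (setminus (add1 S b) P) (length lK)) as [lq [Hlqnd [Hlq Hlqlen]]].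
  { intros l Hnd Hl. apply NNPP; intro Hlt.
    apply (KLR L Y K2 HM HK2 (length lK) P (add1 S b) l).
    - intros v [? ?]; auto.
    - exists lK; split; auto.
    - apply HSbY.
    - auto.
    - intros v [_ Sv]; left; auto.
    - auto.
    - lia.
    - intros x Hx; apply Hl in Hx; destruct Hx; split; auto. }
  assert (Hb : In b lq).
  { apply Hlq. split. right; auto. intros [K2b _]; auto. }
  assert (Hc : card_eq (setminus S P) (pred (length lq))).
  { destruct lq as [|z lq']; [contradiction|]. simpl pred.
    apply card_ext with (A := fun y => setminus (add1 S b) P y /\ y <> b).
    - intros v; split.
      + intros [[[Sv| ->] nPv] nvb]; [split; auto|contradiction].
      + intros [Sv nPv]. split. split; [left; auto|auto]. intros ->. apply nSb; auto.
    - apply card_remove. exists (z::lq'); split; auto; split; auto.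
      split. right; auto. intros [K2b _]; auto. }
  apply (KLR L (fun x => S x \/ D x) S HM) with (m := pred (length lq)) (I := P) (J := K2) (l := lK).
  - split. intros v Sv; left; auto. split; auto. intros T HT HST HTY v Tv.
    destruct (HTY v Tv) as [|Dv]; auto. apply NNPP; intro nSv.
    apply (HD v (proj2 Dv) nSv). apply (Hsub _ T); auto. intros w [Sw| ->]; auto.
  - intros v [_ Sv]; auto.
  - exact Hc.
  - intros v K2v. destruct (HK2Y v K2v) as [|[| ->]]; auto. contradiction.
  - auto.
  - intros v [K2v _]; auto.
  - auto.
  - destruct lq; [contradiction|simpl in *; lia].
  - intros x Hx. apply HlK in Hx. destruct Hx; split; auto.
Qed.

Lemma trunc_sub {E} (L : indep_sys E) k S : trunc_indep L k S -> L S.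
Proof. intros [H _]; auto. Qed.

Lemma fin_trunc_sub {E} (L : indep_sys E) k S :
  fin_indep (trunc_indep L k) S -> fin_indep L S.
Proof. intros H G HG Hf. apply (trunc_sub L k), H; auto. Qed.

Lemma inf_fin_trunc {E} (L : indep_sys E) k F T : ~ finite_set F -> subset F T ->
  fin_indep L T -> fin_indep (trunc_indep L k) T.
Proof.
  intros HF HFT HT G HGT [lg Hlg]. split. apply HT; auto; exists lg; auto.
  destruct (pick F HF lg k) as [l [Hnd [Hlen Hl]]].
  exists (fun x => G x \/ In x l). split.
  - apply HT. intros v [Gv|Iv]; auto. apply HFT; apply Hl; auto.
    exists (lg ++ l). intros v [Gv|Iv]; apply in_or_app; auto.
  - split. intros v Gv; left; auto. exists l; split; auto; split; auto; intros x; split.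
    + intros [[Gx|Ix] nGx]; [contradiction|auto].
    + intros Ix. split; [right; auto|]. intro Gx. apply (proj2 (Hl x Ix)). apply Hlg; auto.
Qed.

Theorem theorem3p4p5 (E : Type) (L : indep_sys E) (k : nat) :
  is_matroid L ->
  nearly_finitary L ->
  (forall n : nat, ~ n_nearly_finitary L n) ->
  nearly_finitary (trunc_indep L k) /\
  (forall n : nat, ~ n_nearly_finitary (trunc_indep L k) n).
Proof.
  intros HM HNF HNN. pose proof HM as [H0 [Hsub [HI3 HIM]]]. split.
  - intros F B HF HB HBF.
    destruct (classic (finite_set F)) as [[lF HlF]|HFinf].
    { exists lF. intros v [Fv _]; auto. }
    assert (HF' : is_base (fin_indep L) F).
    { destruct HF as [_ [HFL HFm]]. split. intros ? ?; exact I. split.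
      - apply (fin_trunc_sub L k); auto.
      - intros T HT HFT _. apply HFm; auto. apply (inf_fin_trunc L k F); auto.
        intros ? ?; exact I. }
    destruct HB as [_ [[HBL [T [HTL [HBT HTc]]]] HBm]].
    destruct (HIM T (fun _ => True) HTL (fun _ _ => I)) as [B0 [HTB0 HB0]].
    assert (HB0L : L B0) by (destruct HB0 as [_ [? _]]; auto).
    assert (HB0c : card_eq (setminus B0 B) k).
    { apply card_ext with (A := setminus T B); auto. intros v; split.
      - intros [Tv nBv]; split; auto.
      - intros [B0v nBv]. split; auto. apply NNPP; intro nTv. apply nBv.
        apply (HBm (add1 B v)).
        + split. apply (Hsub _ B0); auto. intros w [Bw| ->]; auto.
          exists (add1 T v). split. apply (Hsub _ B0); auto. intros w [Tw| ->]; auto.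
          split. intros w [Bw| ->]; [left; auto|right; auto].
          apply card_ext with (A:= setminus T B); auto. intros w; split.
          * intros [Tw nBw]. split. left; auto. intros [Bw| ->]; auto.
          * intros [[Tw| ->] nw]. split; auto. intro; apply nw; left; auto.
            exfalso; apply nw; right; auto.
        + intros w Bw; left; auto.
        + intros ? ?; exact I.
        + right; reflexivity. }
    destruct (HIM B F HBL HBF) as [S [HBS HS]].
    pose proof (SB L F S HM HF' HS) as HSb.
    destruct (HNF F S HF' HSb (proj1 HS)) as [l1 Hl1].
    destruct (fin_bounded (setminus S B) k) as [l2 [_ [Hl2 _]]].
    { intros l Hnd Hl. apply NNPP; intro.
      apply (KLR L (fun _ => True) B0 HM HB0 k B S l); auto.
      - intros w Bw; auto.
      - intros ? ?; exact I.
      - apply HS.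
      - lia. }
    exists (l1 ++ l2). intros v [Fv nBv]. apply in_or_app.
    destruct (classic (S v)). right; apply Hl2; split; auto. left; apply Hl1; split; auto.
  - intros n Hn. apply (HNN n). intros F0 B0 HF0 HB0 HB0F0.
    apply NNPP; intro Hncard.
    pose proof HF0 as [_ [HF0L HF0m]].
    pose proof HB0 as [_ [HB0L HB0m]].
    destruct (classic (finite_set F0)) as [Hfin|HF0inf].
    { apply Hncard. exists []. split; simpl; [lia|]. intros v [F0v nB0v]. apply nB0v.
      apply (HB0m F0); auto. apply HF0L; auto. intros w Hw; auto. intros ? ?; exact I. }
    assert (HB0inf : ~ finite_set B0).
    { intros Hfin. destruct (fin_enum _ Hfin) as [lb [Hlbnd Hlb]].
      destruct (pick F0 HF0inf [] (S (length lb))) as [l [Hnd [Hlen Hl]]].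
      apply (KLR L (fun _ => True) B0 HM HB0 (length lb) emptyset (fun x => In x l) l).
      - intros v [].
      - exists lb; split; auto; split; auto; intros x; split.
        + intros [Bx _]; apply Hlb; auto.
        + intros Ix; split. apply Hlb; auto. intros [].
      - intros ? ?; exact I.
      - apply HF0L. intros v Iv; apply (proj1 (Hl v Iv)). exists l; auto.
      - intros v [].
      - auto.
      - lia.
      - intros x Ix; split; auto. }
    destruct (pick B0 HB0inf [] k) as [lx [Hlxnd [Hlxlen Hlx]]].
    set (B' := fun x => B0 x /\ ~ In x lx).
    assert (HB'c : card_eq (setminus B0 B') k).
    { exists lx; split; auto; split; auto; intros x; split.
      - intros [B0x nB'x]. apply NNPP; intro nIx. apply nB'x; split; auto.
      - intros Ix. split. apply Hlx; auto. intros [_ nIx]; auto. }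
    assert (HB'base : is_base (trunc_indep L k) B').
    { split. intros ? ?; exact I. split.
      - split. apply (Hsub _ B0); auto. intros v [? ?]; auto.
        exists B0. split; auto. split; auto. intros v [? ?]; auto.
      - intros G [HGL [T [HTL [HGT [lt [Hltnd [Hltlen Hlt]]]]]]] HB'G _ g Gg.
        apply NNPP; intro nB'g.
        apply (KLR L (fun _ => True) B0 HM HB0 k B' T (g :: lt)).
        + intros v [? ?]; auto.
        + auto.
        + intros ? ?; exact I.
        + auto.
        + intros v Hv; apply HGT, HB'G; auto.
        + constructor; auto. intro Ig. apply Hlt in Ig. destruct Ig as [_ nGg]. auto.
        + simpl; lia.
        + intros x [<-|Ix]. split; auto. apply Hlt in Ix as [Tx nGx]. split; auto.
          }
    assert (HF0t : is_base (fin_indep (trunc_indep L k)) F0).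
    { split. intros ? ?; exact I. split.
      - apply (inf_fin_trunc L k F0); auto. intros v h; auto.
      - intros T HT HF0T _. apply HF0m; auto. apply (fin_trunc_sub L k); auto.
        intros ? ?; exact I. }
    destruct (Hn F0 B' HF0t HB'base (fun v h => HB0F0 v (proj1 h))) as [l [Hlen Hl]].
    apply Hncard. exists l. split; auto. intros v [F0v nB0v]. apply Hl. split; auto.
    intros [B0v _]; auto.
Qed.
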